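(* Let $\phi:\mathbb{N}_0\to\mathbb{N}_0$ satisfy $\phi(0)=0$ and $\phi(x)\neq x$ for all $x\in\mathbb{N}$, and let $n\ge2$. If the local function $\phi_n$ has no cycle, then \[ \#M_n(\phi)^k=|J_{n,k}(\phi)|\le n-k\quad(1\le k\le n), \] where $J_{n,k}(\phi)=\{x\in D_n:\phi_n^k(x)\in D_n\}$.
   Context: $\mathbb{N}=\{1,2,\dots\}$, $\mathbb{N}_0=\mathbb{N}\cup\{0\}$, $D_n=\{1,\dots,n\}$, $D_{n,0}=D_n\cup\{0\}$. The local function $\phi_n:D_{n,0}\to D_{n,0}$ is $\phi_n(x)=\phi(x)$ if $x\in D_n$ and $\phi(x)\in D_n$, and $\phi_n(x)=0$ otherwise. ''$\phi_n$ has no cycle'' means there are no $m\ge2$ and $x\in D_n$ with $\phi_n^m(x)=x$. For $1\le i\le n$, $\mathbf{e}_i$ is the $i$-th unit vector in $\mathbb{Z}^n$ and $\mathbf{e}_0$ the zero vector. $M_n(\phi)$ is the $n\times n$ matrix whose $j$-th column is $\mathbf{e}_{\phi_n(j)}$. $\#A$ denotes the number of nonzero entries of a matrix $A$, and $\#A^k$ means $\#(A^k)$. *)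

(* Defs.v *)
From HB Require Import structures.
From mathcomp Require Import all_boot all_order all_algebra.
Set Implicit Arguments. Unset Strict Implicit. Unset Printing Implicit Defensive.
Import GRing.Theory.

Definition inD (n x : nat) : bool := (1 <= x) && (x <= n).

Definition phi_loc (phi : nat -> nat) (n : nat) (x : nat) : nat :=
  if inD n x && inD n (phi x) then phi x else 0.

Definition no_cycle (phi : nat -> nat) (n : nat) : Prop :=
  forall (m x : nat), 2 <= m -> inD n x -> iter m (phi_loc phi n) x <> x.

(* M_n(phi): column j (j = 1..n, indexed by ordinal j-1) is e_{phi_n(j)},
   where e_0 is the zero vector. Entry (i,j) is 1 iff phi_n(j) = i (1-based). *)
Definition Mn (phi : nat -> nat) (n : nat) : 'M[int]_n :=
  \matrix_(i < n, j < n) (if phi_loc phi n j.+1 == i.+1 then 1 else 0)%R.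

Definition nnz (m : nat) (A : 'M[int]_m) : nat :=
  #|[set ij : 'I_m * 'I_m | A ij.1 ij.2 != 0%R]|.

Definition Jset (phi : nat -> nat) (n k : nat) : seq nat :=
  [seq x <- iota 1 n | inD n (iter k (phi_loc phi n) x)].

(* Main.v *)
Require Import Defs.
From HB Require Import structures.
From mathcomp Require Import all_boot all_order all_algebra.
From mathcomp Require Import zify.
Import GRing.Theory.

Lemma cnt (n : nat) (P : nat -> bool) :
  #|[pred j : 'I_n | P j.+1]| = count P (iota 1 n).
Proof.
rewrite cardE /enum_mem -enumT size_filter.
have -> : iota 1 n = map S (map val (enum 'I_n)).
  by rewrite val_enum_ord -(addn0 1) iotaDl.
by rewrite !count_map.
Qed.

Lemma loc0 phi n : phi_loc phi n 0 = 0.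
Proof. by rewrite /phi_loc /inD. Qed.

Lemma iter_loc0 phi n k : iter k (phi_loc phi n) 0 = 0.
Proof. by elim: k => //= k ->; rewrite loc0. Qed.

Lemma loc_range phi n y : phi_loc phi n y = 0 \/ inD n (phi_loc phi n y).
Proof.
rewrite /phi_loc; case: ifP => [/andP[_ ->]|]; by [right|left].
Qed.

Lemma iter_range phi n k x : inD n x ->
  iter k (phi_loc phi n) x = 0 \/ inD n (iter k (phi_loc phi n) x).
Proof.
move=> Hx; case: k => [|k]; first by right.
by rewrite iterS; apply: loc_range.
Qed.

Lemma no_per phi n : (forall x, 1 <= x -> phi x <> x) -> no_cycle phi n ->
  forall (m y : nat), 1 <= m -> inD n y -> iter m (phi_loc phi n) y <> y.
Proof.
move=> Hfix Hnc m y Hm Hy.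
case: m Hm => [//|[|m]] _; last by apply: Hnc.
rewrite /= /phi_loc Hy /=; case: ifP => _.
  by apply: Hfix; move: Hy => /andP[].
by move=> E; move: Hy; rewrite -E.
Qed.

Lemma no_invariant phi n (Q : pred nat) x0 :
  (forall x, 1 <= x -> phi x <> x) -> no_cycle phi n ->
  (forall x, Q x -> inD n x) -> (forall x, Q x -> Q (phi_loc phi n x)) ->
  Q x0 -> False.
Proof.
move=> Hfix Hnc HQ Hstab Hx0.
set f := phi_loc phi n.
have HQi : forall i, Q (iter i f x0).
  by elim=> //= i IH; apply: Hstab.
have Hlt : forall i, (iter i f x0).-1 < n.
  move=> i; move: (HQ _ (HQi i)); rewrite /inD => /andP[h1 h2].
  by rewrite prednK.
pose g (i : 'I_n.+1) : 'I_n := Ordinal (Hlt i).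
have ginj : injective g.
  move=> i j /(congr1 val) /= E.
  have E' : iter i f x0 = iter j f x0.
    move: (HQ _ (HQi i)) (HQ _ (HQi j)); rewrite /inD => /andP[a _] /andP[b _].
    by rewrite -(prednK a) -(prednK b) E.
  apply/val_inj => /=; case: (ltngtP i j) => // H.
  - exfalso; apply: (@no_per phi n Hfix Hnc (j - i) (iter i f x0) _ (HQ _ (HQi i))).
    + by rewrite subn_gt0.
    + by rewrite -iterD subnK ?E' // ltnW.
  - exfalso; apply: (@no_per phi n Hfix Hnc (i - j) (iter j f x0) _ (HQ _ (HQi j))).
    + by rewrite subn_gt0.
    + by rewrite -iterD subnK ?E' // ltnW.
have := leq_card g ginj; rewrite !card_ord; by rewrite ltnn.
Qed.

Lemma Mpow phi n k (i j : 'I_n) :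
  ((Mn phi n) ^+ k)%R i j =
  (if iter k (phi_loc phi n) j.+1 == i.+1 then 1 else 0)%R.
Proof.
elim: k i j => [|k IH] i j.
  rewrite expr0; have -> : (1 : 'M[int]_n)%R = 1%:M%R by []. rewrite !mxE /=.
  case: eqP => [E|H].
    by rewrite E eqxx.
  case: eqP => // /succn_inj E; exfalso; apply: H; apply/val_inj; exact: (esym E).
rewrite exprS -mulmxE mxE.
under eq_bigr => l _ do rewrite IH !mxE.
rewrite iterS.
have Hj : inD n j.+1 by rewrite /inD /= ltn_ord.
case: (iter_range phi n k _ Hj) => [->|Hy].
  rewrite loc0.
  by rewrite big1 // => l _; rewrite mulr0.
move: Hy; set y := iter k _ _ => Hy.
have Hl : y.-1 < n by move: Hy; rewrite /inD => /andP[a b]; rewrite prednK.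
rewrite (bigD1 (Ordinal Hl)) //= big1 ?addr0.
  have -> : y.-1.+1 = y by move: Hy; rewrite /inD => /andP[a b]; rewrite prednK.
  by rewrite eqxx mulr1.
move=> l Hne; case: (y =P l.+1) => [E|_]; last by rewrite mulr0.
exfalso; move/eqP: Hne; apply; apply/val_inj => /=; by rewrite E.
Qed.

Lemma nnz_eq phi n k : nnz ((Mn phi n) ^+ k)%R = size (Jset phi n k).
Proof.
set f := phi_loc phi n.
have Hlt : forall j : 'I_n, (iter k f j.+1).-1 < n.
  move=> j; have Hj : inD n j.+1 by rewrite /inD /= ltn_ord.
  case: (iter_range phi n k _ Hj) => [->|]; first by rewrite (leq_ltn_trans _ (ltn_ord j)).
  by rewrite /inD => /andP[a b]; rewrite prednK.
pose h (j : 'I_n) := (Ordinal (Hlt j), j).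
have hinj : injective h by move=> a b [].
rewrite /nnz.
have -> : [set ij : 'I_n * 'I_n | ((Mn phi n) ^+ k)%R ij.1 ij.2 != 0%R]
          = h @: [set j : 'I_n | inD n (iter k f j.+1)].
  apply/setP => -[i j]; rewrite inE /= Mpow.
  apply/idP/imsetP.
  - rewrite -/f; case: (iter k f j.+1 =P i.+1) => // E _; exists j.
      by rewrite inE E /inD /= ltn_ord.
    rewrite /h; congr pair; apply/val_inj => /=; by rewrite E.
  - move=> [j' Hj' [-> ->]] /=; rewrite inE in Hj'.
    move: Hj'; rewrite -/f /inD => /andP[a b]; by rewrite prednK // eqxx.
rewrite (card_imset _ hinj).
rewrite (@eq_card _ _ [pred j : 'I_n | inD n (iter k f j.+1)]); last by move=> j; rewrite inE.
by rewrite (cnt n (fun x => inD n (iter k f x))) /Jset size_filter.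
Qed.

Lemma Jbound phi n : (forall x, 1 <= x -> phi x <> x) -> no_cycle phi n ->
  forall k, size (Jset phi n k) <= n - k.
Proof.
move=> Hfix Hnc; set f := phi_loc phi n; set s := iota 1 n.
have memD : forall x, (x \in s) = inD n x.
  by move=> x; rewrite mem_iota /inD add1n ltnS.
have notD : forall y, ~~ inD n y -> f y = 0.
  by move=> y Hy; rewrite /f /phi_loc (negbTE Hy).
have sub : forall k x, inD n (iter k.+1 f x) -> inD n (iter k f x).
  move=> k x; rewrite iterS; case: (boolP (inD n (iter k f x))) => // H.
  by rewrite notD.
elim=> [|k IH].
  by rewrite /Jset size_filter subn0 -/s -(size_iota 1 n) count_size.
rewrite /Jset !size_filter -/s -/f in IH *.
set F := [seq x <- s | inD n (iter k f x)].
have E1 : count (fun x => inD n (iter k.+1 f x)) s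
          = count (fun x => inD n (iter k.+1 f x)) F.
  rewrite count_filter; apply: eq_count => x /=.
  by case: (boolP (inD n (iter k.+1 f x))) => //= /sub ->.
have E2 := count_predC (fun x => inD n (iter k.+1 f x)) F.
rewrite size_filter in E2.
rewrite E1.
case: (boolP (has (predC (fun x => inD n (iter k.+1 f x))) F)) => Hh.
  move: Hh; rewrite has_count => Hh.
  lia.
case EF : F Hh E1 E2 => [|x0 F'] Hh E1 E2 ; first by [].
exfalso.
have HF : forall x, x \in x0 :: F' -> inD n (iter k.+1 f x).
  move=> x Hx; move/hasPn: Hh => /(_ x Hx) /=; by rewrite negbK.
have memF : forall x, (x \in x0 :: F') = inD n x && inD n (iter k f x).
  move=> x; rewrite -EF mem_filter memD. by rewrite andbC.
apply: (@no_invariant phi n (fun x => x \in x0 :: F') x0 Hfix Hnc).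
- by move=> x; rewrite memF => /andP[].
- move=> x Hx; have := HF x Hx; rewrite iterSr => H.
  rewrite memF H andbT.
  case: (loc_range phi n x) => // E0.
  by move: H; rewrite /f E0 iter_loc0.
- by rewrite mem_head.
Qed.

Theorem corollary3p4 (phi : nat -> nat) (n : nat) :
  phi 0 = 0 ->
  (forall x, 1 <= x -> phi x <> x) ->
  2 <= n ->
  no_cycle phi n ->
  forall k, 1 <= k <= n ->
    nnz ((Mn phi n) ^+ k)%R = size (Jset phi n k) /\ size (Jset phi n k) <= n - k.
Proof.
move=> _ Hfix _ Hnc k _; split; first exact: nnz_eq.
exact: Jbound.
Qed.
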